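(* Consider class-incremental learning with pre-training in the setting described in the context. Suppose $\mathbb{E}_{\boldsymbol{x}}[H_{\rm WTP}(\boldsymbol{x})]\le\delta$, $\mathbb{E}_{\boldsymbol{x}}[H_{\rm TII}(\boldsymbol{x})]\le\epsilon$ and $\mathbb{E}_{\boldsymbol{x}}[H_{\rm TAP}(\boldsymbol{x})]\le\eta$. Then the loss error satisfies $\mathcal{L}\in[0,\max\{\delta+\epsilon,\eta\}]$. This holds regardless of whether the within-task prediction, task-identity inference and task-adaptive prediction distributions are trained together or separately.
   Context: Class-incremental setting: tasks $1,\dots,t$ with training sets $\mathcal{D}=\{\mathcal{D}_1,\dots,\mathcal{D}_t\}$, input domains $\mathcal{X}_k=\bigcup_j \mathcal{X}_{k,j}$ and pairwise disjoint label sets $\mathcal{Y}_k=\{\mathcal{Y}_{k,j}\}_{j=1}^{|\mathcal{Y}_k|}$ ($\mathcal{Y}_k\cap\mathcal{Y}_{k'}=\emptyset$ for $k\ne k'$), where $\mathcal{X}_{k,j}$ is the domain of the $j$-th class of task $k$; $\theta$ are the parameters of a pre-trained backbone. For a class $c\in\bigcup_{k\le t}\mathcal{Y}_k$, $\mathcal{X}^c$ denotes the domain of class $c$. For a sample $\boldsymbol{x}\in\bigcup_{k\le t}\mathcal{X}_k$, let $\bar i$ be its true task index, $\bar j$ its true within-task class index, and $y=\mathcal{Y}_{\bar i,\bar j}$ its true label. The model specifies: a task-identity inference (TII) distribution $\{P(\boldsymbol{x}\in\mathcal{X}_i\mid\mathcal{D},\theta)\}_{i=1}^t$; for each task $i$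 a within-task prediction (WTP) distribution $\{P(\boldsymbol{x}\in\mathcal{X}_{i,j}\mid\boldsymbol{x}\in\mathcal{X}_i,\mathcal{D},\theta)\}_j$; the induced joint prediction $P(\boldsymbol{x}\in\mathcal{X}_{i,j}\mid\mathcal{D},\theta)=P(\boldsymbol{x}\in\mathcal{X}_{i,j}\mid\boldsymbol{x}\in\mathcal{X}_i,\mathcal{D},\theta)\,P(\boldsymbol{x}\in\mathcal{X}_i\mid\mathcal{D},\theta)$; and a task-adaptive prediction (TAP) distribution $\{P(\boldsymbol{x}\in\mathcal{X}^c\mid\mathcal{D},\theta)\}_c$ over all observed classes. With $\mathcal{H}(p,q)=-\sum_i p_i\log q_i$ and $\boldsymbol{1}_\cdot$ one-hot encoding, define $H_{\rm WTP}(\boldsymbol{x})=\mathcal{H}(\boldsymbol{1}_{\bar j},\{P(\boldsymbol{x}\in\mathcal{X}_{\bar i,j}\mid\boldsymbol{x}\in\mathcal{X}_{\bar i},\mathcal{D},\theta)\}_j)$, $H_{\rm TII}(\boldsymbol{x})=\mathcal{H}(\boldsymbol{1}_{\bar i},\{P(\boldsymbol{x}\in\mathcal{X}_i\mid\mathcal{D},\theta)\}_i)$, $H_{\rm TAP}(\boldsymbol{x})=\mathcal{H}(\boldsymbol{1}_{y},\{P(\boldsymbol{x}\in\mathcal{X}^c\mid\mathcal{D},\theta)\}_c)$. The goal is the multi-objective problem $\max[P(\boldsymbol{x}\in\mathcal{X}_{\bar i,\bar j}\mid\mathcal{D},\theta),P(\boldsymbol{x}\in\mathcal{X}^y\mid\mathcal{D},\theta)]$,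 and the loss error is $\mathcal{L}=\max\{\mathbb{E}_{\boldsymbol{x}}[\mathcal{H}(\boldsymbol{1}_{\bar i,\bar j},\{P(\boldsymbol{x}\in\mathcal{X}_{i,j}\mid\mathcal{D},\theta)\}_{i,j})],\ \mathbb{E}_{\boldsymbol{x}}[H_{\rm TAP}(\boldsymbol{x})]\}$. *)

(* Defs.v *)
From HB Require Import structures.
From mathcomp Require Import all_boot all_order all_algebra.
From mathcomp Require Import all_classical all_reals all_analysis.
From mathcomp Require Import measurable_realfun.
Set Implicit Arguments. Unset Strict Implicit. Unset Printing Implicit Defensive.
Import Order.TTheory GRing.Theory Num.Theory.
Import numFieldNormedType.Exports.
Local Open Scope ring_scope.

Definition is_distr (R : realType) (I : finType) (q : I -> R) : Prop :=
  (forall i, 0 <= q i) /\ \sum_(i : I) q i = 1.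

Definition onehot (R : realType) (I : finType) (k : I) : I -> R :=
  fun i => if i == k then 1 else 0.

(* Cross-entropy H(p,q) = - \sum_i p_i log q_i, valued in the extended reals,
   with the standard conventions 0 * log(anything) = 0 and
   - p log 0 = +oo for p > 0. *)
Definition xent (R : realType) (I : finType) (p q : I -> R) : \bar R :=
  \sum_(i : I)
     (if p i == 0%R then 0%E
      else if (0 < q i)%R then (- (p i * ln (q i)))%:E else +oo%E).

(* Labels of the class-incremental setting: task i has n i classes; the class
   j of task i is the pair (i, j), so label sets of different tasks are
   disjoint by construction. *)
Definition label (t : nat) (n : 'I_t -> nat) := {i : 'I_t & 'I_(n i)}.

(* The induced joint prediction P(x in X_{i,j}) = P(x in X_{i,j} | x in X_i) P(x in X_i). *)
Definition joint (R : realType) (t : nat) (n : 'I_t -> nat)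
  (tii : 'I_t -> R) (wtp : forall i : 'I_t, 'I_(n i) -> R) : label n -> R :=
  fun c => wtp (tag c) (tagged c) * tii (tag c).

Definition H_WTP (R : realType) (T : Type) (t : nat) (n : 'I_t -> nat)
  (lab : T -> label n) (wtp : T -> forall i : 'I_t, 'I_(n i) -> R) (x : T) : \bar R :=
  xent (onehot R (tagged (lab x))) (wtp x (tag (lab x))).

Definition H_TII (R : realType) (T : Type) (t : nat) (n : 'I_t -> nat)
  (lab : T -> label n) (tii : T -> 'I_t -> R) (x : T) : \bar R :=
  xent (onehot R (tag (lab x))) (tii x).

Definition H_TAP (R : realType) (T : Type) (t : nat) (n : 'I_t -> nat)
  (lab : T -> label n) (tap : T -> label n -> R) (x : T) : \bar R :=
  xent (onehot R (lab x)) (tap x).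

Definition H_joint (R : realType) (T : Type) (t : nat) (n : 'I_t -> nat)
  (lab : T -> label n) (tii : T -> 'I_t -> R)
  (wtp : T -> forall i : 'I_t, 'I_(n i) -> R) (x : T) : \bar R :=
  xent (onehot R (lab x)) (joint (tii x) (wtp x)).

Definition loss_error (R : realType) (d : measure_display) (T : measurableType d)
  (P : probability T R) (t : nat) (n : 'I_t -> nat)
  (lab : T -> label n) (tii : T -> 'I_t -> R)
  (wtp : T -> forall i : 'I_t, 'I_(n i) -> R) (tap : T -> label n -> R) : \bar R :=
  Order.max (\int[P]_x H_joint lab tii wtp x)%E (\int[P]_x H_TAP lab tap x)%E.

(* Main.v *)
Require Import Defs.
From HB Require Import structures.
From mathcomp Require Import all_boot all_order all_algebra.
From mathcomp Require Import all_classical all_reals all_analysis.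
From mathcomp Require Import measurable_realfun.
Import Order.TTheory GRing.Theory Num.Theory.
Import numFieldNormedType.Exports.
Local Open Scope ring_scope.

Lemma xent_onehot (R : realType) (I : finType) (k : I) (q : I -> R) :
  xent (onehot R k) q = if (0 < q k)%R then (- ln (q k))%:E else +oo%E.
Proof.
rewrite /xent (bigD1 k) //= big1 ?adde0.
  by rewrite /onehot eqxx oner_eq0 mul1r.
by move=> i /negbTE ik; rewrite /onehot ik eqxx.
Qed.

Lemma distr_le1 (R : realType) (I : finType) (q : I -> R) k :
  is_distr q -> q k <= 1.
Proof.
move=> [q0 q1]; rewrite -q1 (bigD1 k) //= lerDl.
by apply: sumr_ge0.
Qed.

Lemma xent_onehot_ge0 (R : realType) (I : finType) (k : I) (q : I -> R) :
  is_distr q -> (0 <= xent (onehot R k) q)%E.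
Proof.
move=> Hq; rewrite xent_onehot; case: ifP => // q0.
rewrite lee_fin oppr_ge0 ln_le0 //. exact: distr_le1.
Qed.

Lemma H_joint_split (R : realType) (T : Type) (t : nat) (n : 'I_t -> nat)
  (lab : T -> label n) (tii : T -> 'I_t -> R)
  (wtp : T -> forall i : 'I_t, 'I_(n i) -> R)
  (Htii : forall x, is_distr (tii x))
  (Hwtp : forall x (i : 'I_t), is_distr (wtp x i)) x :
  H_joint lab tii wtp x = (H_WTP lab wtp x + H_TII lab tii x)%E.
Proof.
rewrite /H_joint /H_WTP /H_TII !xent_onehot /joint.
set a := wtp x _ _; set b := tii x _.
have a0 : 0 <= a by case: (Hwtp x (tag (lab x))) => H _; apply: H.
have b0 : 0 <= b by case: (Htii x) => H _; apply: H.
have a1 : a <= 1 by exact: distr_le1.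
have b1 : b <= 1 by exact: distr_le1.
have [ap|ap] := ltrP 0 a; have [bp|bp] := ltrP 0 b.
- rewrite mulr_gt0 // lnM ?posrE // -EFinD; by rewrite opprD.
- have -> : b = 0 by apply/le_anti; rewrite bp b0.
  by rewrite mulr0 ltxx addey.
- have -> : a = 0 by apply/le_anti; rewrite ap a0.
  by rewrite mul0r ltxx addye.
- have -> : a = 0 by apply/le_anti; rewrite ap a0.
  by rewrite mul0r ltxx addye.
Qed.

Theorem theorem1 (R : realType) (d : measure_display) (T : measurableType d)
  (P : probability T R) (t : nat) (n : 'I_t -> nat)
  (lab : T -> label n)
  (tii : T -> 'I_t -> R)
  (wtp : T -> forall i : 'I_t, 'I_(n i) -> R)
  (tap : T -> label n -> R)
  (delta eps eta : R)
  (Htii : forall x, is_distr (tii x))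
  (Hwtp : forall x (i : 'I_t), is_distr (wtp x i))
  (Htap : forall x, is_distr (tap x))
  (mWTP : measurable_fun setT (H_WTP lab wtp))
  (mTII : measurable_fun setT (H_TII lab tii))
  (mTAP : measurable_fun setT (H_TAP lab tap))
  (hWTP : (\int[P]_x H_WTP lab wtp x <= delta%:E)%E)
  (hTII : (\int[P]_x H_TII lab tii x <= eps%:E)%E)
  (hTAP : (\int[P]_x H_TAP lab tap x <= eta%:E)%E) :
  (0 <= loss_error P lab tii wtp tap
   /\ loss_error P lab tii wtp tap <= (Order.max (delta + eps) eta)%:E)%E.
Proof.
have W0 x : (0 <= H_WTP lab wtp x)%E by exact: xent_onehot_ge0.
have I0 x : (0 <= H_TII lab tii x)%E by exact: xent_onehot_ge0.
have A0 x : (0 <= H_TAP lab tap x)%E by exact: xent_onehot_ge0.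
have EJ : (\int[P]_x H_joint lab tii wtp x =
   \int[P]_x H_WTP lab wtp x + \int[P]_x H_TII lab tii x)%E.
  rewrite -ge0_integralD //; apply: eq_integral => x _.
  exact: H_joint_split.
rewrite /loss_error; split.
  rewrite le_max; apply/orP; right; apply: integral_ge0 => x _; exact: A0.
rewrite ge_max; apply/andP; split.
  rewrite EJ; apply: le_trans (leeD hWTP hTII) _.
  by rewrite -EFinD lee_fin le_max lexx.
by apply: le_trans hTAP _; rewrite lee_fin le_max lexx orbT.
Qed.
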